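(* Let $\mathcal{G}$ be a finite-dimensional solvable Lie algebra and let $S$ be a finite abelian semigroup containing a zero element $0_S$. Then the $0_S$-reduced algebra $\mathcal{G}_S^{\mathrm{red}}$ obtained from the $S$-expanded algebra $\mathcal{G}_S=S\otimes\mathcal{G}$ is solvable.
   Context: For a Lie algebra $\mathcal{G}$ with basis $\{X_i\}$, $[X_i,X_j]=C_{ij}^kX_k$, and a finite abelian semigroup $S=\{\lambda_\alpha\}$ with 2-selector $K_{\alpha\beta}^\gamma$ ($=1$ if $\lambda_\alpha\lambda_\beta=\lambda_\gamma$, else $0$), the $S$-expanded algebra $\mathcal{G}_S=S\otimes\mathcal{G}$ has basis $X_{(i,\alpha)}=\lambda_\alpha\otimes X_i$ and bracket $[X_{(i,\alpha)},X_{(j,\beta)}]=K_{\alpha\beta}^\gamma C_{ij}^k X_{(k,\gamma)}$. A zero element is $0_S\in S$ with $0_S\lambda=0_S$ for all $\lambda\in S$. The $0_S$-reduced algebra $\mathcal{G}_S^{\mathrm{red}}$ is the Lie algebra spanned by $X_{(i,\alpha)}$ with $\lambda_\alpha\neq 0_S$, with bracket $[X_{(i,\alpha)},X_{(j,\beta)}]=\sum_{\gamma:\lambda_\gamma\neq0_S}K_{\alpha\beta}^\gamma C_{ij}^k X_{(k,\gamma)}$ (i.e. obtained by setting $0_S\otimes\mathcal{G}=0$). *)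

(* Defs.v *)
From HB Require Import structures.
From mathcomp Require Import all_boot all_order all_algebra.
Set Implicit Arguments. Unset Strict Implicit. Unset Printing Implicit Defensive.
Import GRing.Theory.
Local Open Scope ring_scope.

(* A finite-dimensional Lie algebra over a field K with basis indexed by a
   finite type I is given by its structure constants C i j k:
   [X_i, X_j] = \sum_k C i j k X_k.  Vectors are {ffun I -> K}. *)

Definition bracket (K : fieldType) (I : finType) (C : I -> I -> I -> K)
  (x y : {ffun I -> K}) : {ffun I -> K} :=
  [ffun k => \sum_i \sum_j x i * y j * C i j k].

Definition is_lie_algebra (K : fieldType) (I : finType) (C : I -> I -> I -> K) :=
  (forall i j k, C i j k = - C j i k) /\
  (forall i k, C i i k = 0) /\
  (forall i j k m,
     \sum_l (C i j l * C l k m + C j k l * C l i m + C k i l * C l j m) = 0).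

Inductive span (K : fieldType) (I : finType) (P : {ffun I -> K} -> Prop)
  : {ffun I -> K} -> Prop :=
| span_gen x : P x -> span P x
| span_0 : span P [ffun => 0]
| span_add x y : span P x -> span P y -> span P [ffun i => x i + y i]
| span_scale (a : K) x : span P x -> span P [ffun i => a * x i].

Fixpoint derived (K : fieldType) (I : finType) (C : I -> I -> I -> K) (n : nat)
  : {ffun I -> K} -> Prop :=
  match n with
  | 0 => fun _ => True
  | n'.+1 => span (fun z => exists x y, derived C n' x /\ derived C n' y /\
                                        z = bracket C x y)
  end.

Definition solvable_lie (K : fieldType) (I : finType) (C : I -> I -> I -> K) :=
  exists n, forall x, derived C n x -> forall i, x i = 0.

Definition abelian_semigroup (S : finType) (mul : S -> S -> S) :=
  associative mul /\ commutative mul.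

Definition is_zero_elem (S : finType) (mul : S -> S -> S) (z : S) :=
  forall s, mul z s = z.

Definition red_index (S : finType) (z : S) (I : finType) : finType :=
  ({s : S | s != z} * I)%type.

(* Structure constants of the 0_S-reduced algebra:
   [X_(i,a), X_(j,b)] = sum_{c <> 0_S} K_{ab}^c C_ij^k X_(k,c). *)
Definition red_constants (K : fieldType) (S : finType) (mul : S -> S -> S)
  (z : S) (I : finType) (C : I -> I -> I -> K)
  (p q r : red_index z I) : K :=
  if mul (val p.1) (val q.1) == val r.1 then C p.2 q.2 r.2 else 0.

(* Main.v *)
Require Import Defs.
From mathcomp Require Import all_boot all_order all_algebra.
Set Implicit Arguments. Unset Strict Implicit.
Import GRing.Theory.
Local Open Scope ring_scope.

Section S.
Variables (K : fieldType) (I : finType) (C : I -> I -> I -> K).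

Lemma derived0 n : derived C n 0.
Proof.
case: n => [//|n] /=.
have -> : (0 : {ffun I -> K}) = [ffun => 0] by apply/ffunP=> i; rewrite !ffunE.
exact: span_0.
Qed.

Lemma derivedD n x y : derived C n x -> derived C n y -> derived C n (x + y).
Proof.
case: n => [//|n] /= hx hy.
have -> : x + y = [ffun i => x i + y i] by apply/ffunP=> i; rewrite !ffunE.
exact: span_add.
Qed.

Lemma derivedS (J : finType) (P : pred J) n (F : J -> {ffun I -> K}) :
  (forall j, P j -> derived C n (F j)) -> derived C n (\sum_(j | P j) F j).
Proof.
move=> h; apply: (big_ind (derived C n)); [exact: derived0|exact: derivedD|exact: h].
Qed.
End S.

Section R.
Variables (K : fieldType) (I : finType) (C : I -> I -> I -> K)
  (S : finType) (mul : S -> S -> S) (z : S).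
Notation RI := (red_index z I).
Notation RC := (@red_constants K S mul z I C).

Definition comp (x : {ffun RI -> K}) (s : {s : S | s != z}) : {ffun I -> K} :=
  [ffun i => x (s, i)].

Lemma sumRI (F : RI -> K) : \sum_p F p = \sum_a \sum_i F (a, i).
Proof. rewrite pair_big /=; apply: eq_bigr => -[a i] _ //. Qed.

Lemma comp_bracket x y r :
  comp (bracket RC x y) r =
  \sum_a \sum_b (if mul (val a) (val b) == val r
                 then bracket C (comp x a) (comp y b) else 0).
Proof.
apply/ffunP=> k; rewrite !ffunE !sum_ffunE.
rewrite sumRI; apply: eq_bigr => a _.
rewrite sum_ffunE.
under eq_bigr => i _ do rewrite sumRI.
rewrite exchange_big /=; apply: eq_bigr => b _.
rewrite /red_constants /=.
case: ifP => _.
  rewrite ffunE; apply: eq_bigr => i _; apply: eq_bigr => j _; by rewrite !ffunE.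
by rewrite ffunE big1 // => i _; rewrite big1 // => j _; rewrite mulr0.
Qed.

Lemma comp_derived n x : derived RC n x -> forall s, derived C n (comp x s).
Proof.
elim: n x => [//|n IH] x /= h.
elim: h => {x}.
- move=> _ [x [y [hx [hy ->]]]] r; rewrite comp_bracket.
  apply: (derivedS (n:=n.+1)) => a _; apply: (derivedS (n:=n.+1)) => b _.
  case: ifP => _; last exact: (derived0 _ n.+1).
  apply: span_gen; exists (comp x a), (comp y b); split; [exact: IH|split; [exact: IH|by []]].
- move=> s; have -> : comp [ffun => 0] s = [ffun => 0] by apply/ffunP=> i; rewrite !ffunE.
  exact: span_0.
- move=> x y _ hx _ hy s.
  have -> : comp [ffun i => x i + y i] s = [ffun i => comp x s i + comp y s i]
    by apply/ffunP=> i; rewrite !ffunE.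
  exact: span_add.
- move=> a x _ hx s.
  have -> : comp [ffun i => a * x i] s = [ffun i => a * comp x s i]
    by apply/ffunP=> i; rewrite !ffunE.
  exact: span_scale.
Qed.
End R.

Theorem theorem3 (K : fieldType) (I : finType) (C : I -> I -> I -> K)
  (S : finType) (mul : S -> S -> S) (z : S) :
  is_lie_algebra C -> solvable_lie C ->
  abelian_semigroup mul -> is_zero_elem mul z ->
  solvable_lie (@red_constants K S mul z I C).
Proof.
move=> _ [n hn] _ _; exists n => x hx [s i].
have := hn _ (comp_derived hx s) i; by rewrite ffunE.
Qed.
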